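(* Let $G$ be a primitive 4-point graph in $\phi^4$. (a) Let $i_1,\dots,i_{j+1}$ be distinct edges of $G$ ($j\ge5$) such that $D^j_G(i_1,\dots,i_j)$ and $D^{j+1}_G(i_1,\dots,i_{j+1})$ are defined and nonzero. If $D^j_G(i_1,\dots,i_j)$ is a signed sum of products of pairs of spanning forest polynomials of $G\setminus\{i_1,\dots,i_j\}$ with $c$ colours, and $D^{j+1}_G(i_1,\dots,i_{j+1})$ is a signed sum of products of pairs of spanning forest polynomials of $G\setminus\{i_1,\dots,i_{j+1}\}$ with $c'$ colours (both graphs on the vertex set $V(G)$), then $c'=c+1$. (b) If a vertex $v$ is isolated in $G\setminus\{i_1,\dots,i_k\}$, and $D^k_G(i_1,\dots,i_k)\ne0$ is a signed sum of products of pairs of spanning forest polynomials of $G\setminus\{i_1,\dots,i_k\}$ with $c$ colours, then the same polynomial is a signed sum of products of pairs of spanning forest polynomials of the graph $(G\setminus\{i_1,\dots,i_k\})-v$ with $c-2$ colours.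
   Context: A 4-point graph in $\phi^4$ is a connected graph $G$ obtained from a connected 4-regular graph by removing one vertex; it is primitive if every proper subgraph $\gamma$ with at least one edge satisfies $|E(\gamma)|>2\ell(\gamma)$, $\ell$ the first Betti number. Each edge $e$ carries a variable $a_e$. For a graph $H$ and a partition $P$ of a subset of $V(H)$, $\mathcal F_{P,H}$ is the set of acyclic subgraphs $F$ with $V(F)=V(H)$, whose number of connected components equals the number of parts of $P$, such that each part of $P$ lies in one component containing no other vertices of $P$; the spanning forest polynomial is $\Phi^P_H=\sum_{F\in\mathcal F_{P,H}}\prod_{e\notin F}a_e$. The number of colours of a product $\Phi^{P_1}_H\cdots\Phi^{P_k}_H$ is $|P_1|+\dots+|P_k|$ ($|P|$ = number of parts). ''A signed sum of products of pairs of spanning forest polynomials of $H$ with $c$ colours'' means an expression $\sum_t\pm\Phi^{P_t}_H\Phi^{P'_t}_H$ with every term nonzero and $|P_t|+|P'_t|=c$ for all $t$. Dodgson polynomials: with $M=\begin{bmatrix}\Lambda & \widetilde E^T\\ -\widetilde E & 0\end{bmatrix}$ ($\Lambda$ diagonal matrix of edge variables, $\widetilde E$ an incidence matrix of an orientation with one row removed), $\Psi^{I,J}_{G,K}=\det M(I,J)|_{a_e=0,e\in K}$ where $M(I,J)$ removes rows indexed by edge set $I$ and columns by $J$, $|I|=|J|$. 5-invariant: ${}^5\Psi_G(i,j,k,l,m)=\pm(\Psi^{ij,kl}_{G,m}\Psi^{ikm,jlm}_G-\Psi^{ik,jl}_{G,m}\Psi^{ijm,klm}_G)$. Denominator reduction: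 $D^5_G(i_1,\dots,i_5)={}^5\Psi_G(i_1,\dots,i_5)$; if $D^n_G(i_1,\dots,i_n)=(Aa_\ell+B)(Ca_\ell+D)$ with $A,B,C,D$ not involving $a_\ell$ then $D^{n+1}_G(i_1,\dots,i_n,\ell)=\pm(AD-BC)$. *)

(* Defs.v *)
From HB Require Import structures.
From mathcomp Require Import all_boot all_order all_algebra.
Set Implicit Arguments. Unset Strict Implicit. Unset Printing Implicit Defensive.
Import GRing.Theory Num.Theory.
Local Open Scope ring_scope.

(* A finite multigraph: vertex type V, edge type E, each edge e oriented
   from (ends e).1 to (ends e).2 (self-loops allowed). A "graph" H in the
   statements is a pair (W, S): vertex set W, edge set S (edges with ends in W). *)

Section Graphs.
Variables (V E : finType) (ends : E -> V * V).

Definition adj (F : {set E}) : rel V :=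
  fun x y => [exists e in F, (ends e == (x, y)) || (ends e == (y, x))].

Definition comp (W : {set V}) (F : {set E}) (x : V) : {set V} :=
  [set y in W | connect (adj F) x y].

Definition ncomp (W : {set V}) (F : {set E}) : nat :=
  #|[set comp W F x | x in W]|.

(* acyclic: no edge lies on a cycle, i.e. every edge of F is a bridge of F
   (loops and parallel edges are cycles) *)
Definition acyclic (F : {set E}) : bool :=
  [forall e in F, ~~ connect (adj (F :\ e)) (ends e).1 (ends e).2].

Definition is_part (W : {set V}) (P : {set {set V}}) : bool :=
  [forall p in P, (p != set0) && (p \subset W)] &&
  [forall p in P, forall q in P, (p != q) ==> [disjoint p & q]].

Definition sf_forest (W : {set V}) (S : {set E}) (P : {set {set V}})
    (F : {set E}) : bool :=
  [&& F \subset S, acyclic F, ncomp W F == #|P|,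
      [forall p in P, forall x in p, forall y in p, connect (adj F) x y] &
      [forall p in P, forall q in P, (p != q) ==>
          [forall x in p, forall y in q, ~~ connect (adj F) x y]]].

(* polynomials in the edge variables a_e with integer coefficients are
   represented by their (injective) evaluation maps (E -> int) -> int *)
Definition polyf := (E -> int) -> int.

Definition zerop : polyf := fun _ => 0.

Inductive polyfun : polyf -> Prop :=
| pf_const (c : int) : polyfun (fun _ => c)
| pf_var (e : E) : polyfun (fun a => a e)
| pf_add f g : polyfun f -> polyfun g -> polyfun (fun a => f a + g a)
| pf_mul f g : polyfun f -> polyfun g -> polyfun (fun a => f a * g a).

Definition indep (l : E) (f : polyf) : Prop :=
  forall (a : E -> int) (x : int), f (fun e => if e == l then x else a e) = f a.

Definition Phi (W : {set V}) (S : {set E}) (P : {set {set V}}) : polyf :=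
  fun a => \sum_(F : {set E} | sf_forest W S P F) \prod_(e in S :\: F) a e.

Definition signed_sum (W : {set V}) (S : {set E}) (c : nat) (Q : polyf) : Prop :=
  exists t : seq (bool * {set {set V}} * {set {set V}}),
    (forall x, x \in t ->
       [/\ is_part W x.1.2, is_part W x.2, (#|x.1.2| + #|x.2|)%N = c &
           (fun a => Phi W S x.1.2 a * Phi W S x.2 a) <> zerop]) /\
    Q = (fun a => \sum_(x <- t) (-1) ^+ x.1.1 * (Phi W S x.1.2 a * Phi W S x.2 a)).

Definition isolated (S : {set E}) (v : V) : bool :=
  [forall e in S, ((ends e).1 != v) && ((ends e).2 != v)].

(* r : the vertex whose row is removed from the incidence matrix *)
Variable r : V.

Definition idx := (E + {x : V | x != r})%type.

Definition inc (v : V) (e : E) : int :=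
  (v == (ends e).1)%:Z - (v == (ends e).2)%:Z.

(* M = [[Lambda, Et^T], [-Et, 0]] *)
Definition Mentry (a : E -> int) (x y : idx) : int :=
  match x, y with
  | inl e, inl f => if e == f then a e else 0
  | inl e, inr w => inc (val w) e
  | inr w, inl e => - inc (val w) e
  | inr _, inr _ => 0
  end.

(* Psi^{I,J}_K = det M(I,J) with a_e = 0 for e in K; the remaining rows and
   columns are taken in the canonical enumeration order (sign convention) *)
Definition Dodgson (I J K : {set E}) : polyf := fun a =>
  let a' := fun e => if e \in K then 0 else a e in
  let R := [set x : idx | if x is inl e then e \notin I else true] in
  let C := [set x : idx | if x is inl e then e \notin J else true] in
  \det (\matrix_(i < #|R|, j < #|R|)
          Mentry a' (enum_val i) (nth (enum_val i) (enum C) j)).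

Definition five_inv (i j k l m : E) : polyf := fun a =>
  Dodgson [set i; j] [set k; l] [set m] a * Dodgson [set i; k; m] [set j; l; m] set0 a
  - Dodgson [set i; k] [set j; l] [set m] a * Dodgson [set i; j; m] [set k; l; m] set0 a.

(* DR s Q : Q is (a value, determined up to sign, of) D^n_G(s) *)
Inductive DR : seq E -> polyf -> Prop :=
| DR5 (i j k l m : E) (Q : polyf) :
    uniq [:: i; j; k; l; m] ->
    (Q = five_inv i j k l m \/ Q = (fun a => - five_inv i j k l m a)) ->
    DR [:: i; j; k; l; m] Q
| DRS (s : seq E) (l : E) (P A B C D Q : polyf) :
    DR s P -> l \notin s ->
    polyfun A -> polyfun B -> polyfun C -> polyfun D ->
    indep l A -> indep l B -> indep l C -> indep l D ->
    (forall a, P a = (A a * a l + B a) * (C a * a l + D a)) ->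
    (Q = (fun a => A a * D a - B a * C a) \/ Q = (fun a => - (A a * D a - B a * C a))) ->
    DR (rcons s l) Q.

End Graphs.

Definition degree (V E : finType) (ends : E -> V * V) (v : V) : nat :=
  (#|[set e | (ends e).1 == v]| + #|[set e | (ends e).2 == v]|)%N.

(* G is connected and obtained from a connected 4-regular graph by
   removing one vertex (the vertex None below) *)
Definition four_point (V E : finType) (ends : E -> V * V) : Prop :=
  ncomp ends setT setT = 1%N /\
  exists (E' : finType) (ext : E' -> option V * option V),
    (forall e', ((ext e').1 == None) || ((ext e').2 == None)) /\
    let big := fun x : (E + E')%type =>
      match x with
      | inl e => (Some (ends e).1, Some (ends e).2)
      | inr e' => ext e'
      end in
    (forall w, degree big w = 4%N) /\ ncomp big setT setT = 1%N.

(* first Betti number of the subgraph with edge set F: |F| - |V| + #comp *)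
Definition loops (V E : finType) (ends : E -> V * V) (F : {set E}) : int :=
  #|F|%:Z - #|V|%:Z + (ncomp ends setT F)%:Z.

Definition primitive (V E : finType) (ends : E -> V * V) : Prop :=
  forall F : {set E}, F \proper setT -> F != set0 ->
    2 * loops ends F < #|F|%:Z.

Definition primitive_4pt (V E : finType) (ends : E -> V * V) : Prop :=
  four_point ends /\ primitive ends.

(* Main.v *)
Require Import Defs.
From HB Require Import structures.
From mathcomp Require Import all_boot all_order all_algebra.
From mathcomp Require Import ring zify.
From Stdlib Require Import FunctionalExtensionality Classical.
Set Implicit Arguments. Unset Strict Implicit. Unset Printing Implicit Defensive.

Module Alg.
Import GRing.Theory Num.Theory.
Local Open Scope ring_scope.

Definition hom (E : finType) (f : polyf E) (p q : nat) : Prop :=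
  forall (t : int) (a : E -> int), t != 0 ->
    t ^+ p * f (fun e => t * a e) = t ^+ q * f a.

Lemma hom_mul (E : finType) (f g : polyf E) p q p' q' :
  hom f p q -> hom g p' q' -> hom (fun a => f a * g a) (p + p') (q + q').
Proof.
move=> hf hg t a t0; rewrite !exprD.
by rewrite mulrACA hf // hg // mulrACA.
Qed.

Lemma hom_add (E : finType) (f g : polyf E) p q :
  hom f p q -> hom g p q -> hom (fun a => f a + g a) p q.
Proof. by move=> hf hg t a t0; rewrite !mulrDr hf // hg. Qed.

Lemma hom_opp (E : finType) (f : polyf E) p q :
  hom f p q -> hom (fun a => - f a) p q.
Proof. by move=> hf t a t0; rewrite !mulrN hf. Qed.

Lemma hom_sub (E : finType) (f g : polyf E) p q :
  hom f p q -> hom g p q -> hom (fun a => f a - g a) p q.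
Proof. by move=> hf hg; apply: hom_add => //; apply: hom_opp. Qed.

Lemma hom_const0 (E : finType) p q : hom (fun _ : E -> int => 0) p q.
Proof. by move=> t a _; rewrite !mulr0. Qed.

Lemma hom_shift (E : finType) (f : polyf E) p q p' q' :
  hom f p q -> (p + q' = p' + q)%N -> hom f p' q'.
Proof.
move=> hf e t a t0; apply: (mulfI (expf_neq0 p t0)).
rewrite !mulrA -!exprD (addnC p p') exprD -mulrA hf // mulrA -exprD.
by rewrite e addnC.
Qed.

Lemma nonzero_pt (E : finType) (f : polyf E) : f <> @zerop E -> exists a, f a != 0.
Proof.
move=> nz; apply: NNPP => H; apply: nz.
apply: functional_extensionality => a; apply/eqP; apply/negPn/negP => ha.
by apply: H; exists a.
Qed.

Lemma hom_unique (E : finType) (f : polyf E) p q p' q' :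
  f <> @zerop E -> hom f p q -> hom f p' q' -> (p + q' = p' + q)%N.
Proof.
move=> /nonzero_pt [a fa] h1 h2.
have t0 : (2 : int) != 0 by [].
have e1 := h1 2 a t0; have e2 := h2 2 a t0.
have : (2 : int) ^+ (p' + q) * f a = 2 ^+ (p + q') * f a.
  by rewrite !exprD -!mulrA -e1 -e2 !mulrA -!exprD addnC.
move/(mulIf fa)/eqP; rewrite -!natrX eqr_nat eqn_exp2l //.
by move/eqP->.
Qed.

Definition polyrep (E : finType) (f : polyf E) : Prop :=
  forall a : E -> int, exists g : {poly int}, forall t, f (fun e => t * a e) = g.[t].

Lemma polyfun_rep (E : finType) (f : polyf E) : polyfun f -> polyrep f.
Proof.
elim=> [c|e|f1 g1 _ h1 _ h2|f1 g1 _ h1 _ h2] a.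
- by exists c%:P => t; rewrite hornerC.
- by exists ((a e)%:P * 'X) => t; rewrite hornerMX hornerC mulrC.
- have [p1 e1] := h1 a; have [p2 e2] := h2 a.
  by exists (p1 + p2) => t; rewrite hornerD e1 e2.
- have [p1 e1] := h1 a; have [p2 e2] := h2 a.
  by exists (p1 * p2) => t; rewrite hornerM e1 e2.
Qed.

Lemma polyrep_add (E : finType) (f g : polyf E) :
  polyrep f -> polyrep g -> polyrep (fun a => f a + g a).
Proof.
move=> h1 h2 a; have [p1 e1] := h1 a; have [p2 e2] := h2 a.
by exists (p1 + p2) => t; rewrite hornerD e1 e2.
Qed.
Lemma polyrep_mul (E : finType) (f g : polyf E) :
  polyrep f -> polyrep g -> polyrep (fun a => f a * g a).
Proof.
move=> h1 h2 a; have [p1 e1] := h1 a; have [p2 e2] := h2 a.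
by exists (p1 * p2) => t; rewrite hornerM e1 e2.
Qed.
Lemma polyrep_opp (E : finType) (f : polyf E) :
  polyrep f -> polyrep (fun a => - f a).
Proof.
move=> h1 a; have [p1 e1] := h1 a.
by exists (- p1) => t; rewrite hornerN e1.
Qed.

Lemma poly_zero_nz (g : {poly int}) : (forall t : int, t != 0 -> g.[t] = 0) -> g = 0.
Proof.
move=> H; apply: (@roots_geq_poly_eq0 _ g [seq (i.+1)%:Z | i <- iota 0 (size g)]).
- by apply/allP => x /mapP [i _ ->]; apply/rootP; apply: H.
- by rewrite map_inj_uniq ?iota_uniq // => i j [].
- by rewrite size_map size_iota.
Qed.

Lemma sign_fix (E : finType) (Q : polyf E) p q :
  polyrep Q ->
  (forall t a, t != 0 -> (t ^+ p * Q (fun e => t * a e)) ^+ 2 = (t ^+ q * Q a) ^+ 2) ->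
  hom Q p q.
Proof.
move=> hQ H t a t0; have [g eg] := hQ a.
set U := 'X^p * g - 'X^q * (Q a)%:P.
set W := 'X^p * g + 'X^q * (Q a)%:P.
have UW : U * W = 0.
  apply: poly_zero_nz => s s0.
  rewrite hornerM /U /W !(hornerD, hornerN, hornerM, hornerXn, hornerC) -eg.
  apply/eqP; rewrite -subr_sqr subr_eq0; apply/eqP; exact: H.
have : U = 0.
  have [Qa0|Qa0] := eqVneq (Q a) 0.
    have UeW : U = W by rewrite /U /W Qa0 mulr0 subr0 addr0.
    by move: UW; rewrite -UeW => /eqP; rewrite mulf_eq0 orbb => /eqP.
  move/eqP: UW; rewrite mulf_eq0 => /orP [/eqP //|/eqP W0].
  have : W.[1] = 0 by rewrite W0 horner0.
  rewrite /W hornerD !hornerM !hornerXn hornerC !expr1n !mul1r -eg.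
  have -> : (fun e => 1 * a e) = a by apply: functional_extensionality => e; rewrite mul1r.
  move/eqP; rewrite -mulr2n mulrn_eq0 /= => /eqP Qa; by rewrite Qa eqxx in Qa0.
move=> U0; have : U.[t] = 0 by rewrite U0 horner0.
rewrite /U hornerD hornerN !hornerM !hornerXn hornerC -eg.
by move/eqP; rewrite subr_eq0 => /eqP.
Qed.

End Alg.

Set Implicit Arguments. Unset Strict Implicit. Unset Printing Implicit Defensive.
Import Alg.
Module Alg2.
Import GRing.Theory Num.Theory.
Local Open Scope ring_scope.

Lemma factor_hom (E : finType) (l : E) (P A B C D : polyf E) p q :
  polyfun A -> polyfun B -> polyfun C -> polyfun D ->
  indep l A -> indep l B -> indep l C -> indep l D ->
  hom P p q ->
  (forall a, P a = (A a * a l + B a) * (C a * a l + D a)) ->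
  hom (fun a => A a * D a - B a * C a) p.+1 q.
Proof.
move=> pA pB pC pD iA iB iC iD hP HP.
have rA := polyfun_rep pA; have rB := polyfun_rep pB.
have rC := polyfun_rep pC; have rD := polyfun_rep pD.
apply: sign_fix.
  apply: polyrep_add; first exact: polyrep_mul.
  by apply: polyrep_opp; apply: polyrep_mul.
move=> t a t0.
pose ta := fun e => t * a e.
pose X x := fun e => if e == l then x else a e.
have eqX x : (fun e => t * X x e) = (fun e => if e == l then t * x else ta e).
  by apply: functional_extensionality => e; rewrite /X /ta; case: (e == l).
have ex x : t ^+ p * ((A ta * (t * x) + B ta) * (C ta * (t * x) + D ta))
          = t ^+ q * ((A a * x + B a) * (C a * x + D a)).
  have := hP t (X x) t0; rewrite !HP !eqX.
  rewrite (iA ta (t * x)) (iB ta (t * x)) (iC ta (t * x)) (iD ta (t * x)).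
  by rewrite /X (iA a x) (iB a x) (iC a x) (iD a x) eqxx.
have e0 := ex 0; have e1 := ex 1; have em := ex (-1).
set T := t ^+ p in e0 e1 em *.
set A' := A ta in e0 e1 em *; set B' := B ta in e0 e1 em *.
set C' := C ta in e0 e1 em *; set D' := D ta in e0 e1 em *.
set A0 := A a in e0 e1 em *; set B0 := B a in e0 e1 em *.
set C0 := C a in e0 e1 em *; set D0 := D a in e0 e1 em *.
set S := t ^+ q in e0 e1 em *.
have h1 : T * t * (A' * D' + B' * C') = S * (A0 * D0 + B0 * C0).
  apply: (@mulfI _ 2) => //.
  have -> : 2 * (T * t * (A' * D' + B' * C')) =
    T * ((A' * (t * 1) + B') * (C' * (t * 1) + D')) -
    T * ((A' * (t * -1) + B') * (C' * (t * -1) + D')) by ring.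
  rewrite e1 em; ring.
have h2 : T * t * t * (A' * C') = S * (A0 * C0).
  apply: (@mulfI _ 2) => //.
  have -> : 2 * (T * t * t * (A' * C')) =
    T * ((A' * (t * 1) + B') * (C' * (t * 1) + D')) +
    T * ((A' * (t * -1) + B') * (C' * (t * -1) + D'))
    - 2 * (T * ((A' * (t * 0) + B') * (C' * (t * 0) + D'))) by ring.
  rewrite e1 em e0; ring.
have h0 : T * (B' * D') = S * (B0 * D0).
  by rewrite -[LHS]/(T * (B' * D')) ; have := e0; rewrite !mulr0 !add0r.
rewrite (exprS t p) -/ta -/A' -/B' -/C' -/D' -/A0 -/B0 -/C0 -/D0 -/S -/T.
have -> : (t * T * (A' * D' - B' * C')) ^+ 2 =
  (T * t * (A' * D' + B' * C')) ^+ 2 - 4 * (T * t * t * (A' * C')) * (T * (B' * D')) by ring.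
rewrite h1 h2 h0; ring.
Qed.
End Alg2.

Set Implicit Arguments. Unset Strict Implicit. Unset Printing Implicit Defensive.
Import Alg Alg2.
Module Alg3.
Import GRing.Theory Num.Theory.
Local Open Scope ring_scope.

Section D.
Variables (V E : finType) (ends : E -> V * V) (r : V).

Definition isinr (x : idx E r) : bool := if x is inr _ then true else false.
Definition wt (t : int) (x : idx E r) : int := if x is inl _ then 1 else t.
Definition cv : nat := #|[set x : idx E r | isinr x]|.
Definition Rset (I : {set E}) : {set idx E r} :=
  [set x : idx E r | if x is inl e then e \notin I else true].

Lemma det_scale n (rw cl : 'I_n -> idx E r) (b : E -> int) (t : int) :
  \det (\matrix_(i, j) Mentry ends (fun e => t * b e) (rw i) (cl j))
   * (\prod_i wt t (rw i)) * (\prod_j wt t (cl j))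
  = t ^+ n * \det (\matrix_(i, j) Mentry ends b (rw i) (cl j)).
Proof.
rewrite -detZ.
have -> : t *: (\matrix_(i, j) Mentry ends b (rw i) (cl j)) =
  diag_mx (\row_i wt t (rw i)) *m (\matrix_(i, j) Mentry ends (fun e => t * b e) (rw i) (cl j))
   *m diag_mx (\row_j wt t (cl j)).
  apply/matrixP => i j; rewrite mul_mx_diag mul_diag_mx !mxE.
  case: (rw i) => [e|w]; case: (cl j) => [f|w'] /=; rewrite ?mul1r ?mulr1.
  - by case: (e == f); rewrite ?mulr0.
  - by rewrite mulrC.
  - by [].
  - by rewrite !mulr0 mul0r.
rewrite !det_mulmx !det_diag.
have -> : \prod_i (\row_i wt t (rw i)) 0 i = \prod_i wt t (rw i) by apply: eq_bigr => i _; rewrite mxE.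
have -> : \prod_j (\row_j wt t (cl j)) 0 j = \prod_j wt t (cl j) by apply: eq_bigr => i _; rewrite mxE.
ring.
Qed.

Lemma prod_in (A : {set idx E r}) t :
  [set x : idx E r | isinr x] \subset A -> \prod_(x in A) wt t x = t ^+ cv.
Proof.
move=> sub.
rewrite (bigID isinr) /= [X in _ * X]big1; last by case=> [e|w] //=; rewrite andbF.
rewrite mulr1 (eq_bigr (fun _ => t)); last by case=> [e|w] //=; rewrite andbF.
rewrite prodr_const /cv; congr (_ ^+ _); apply: eq_card => x.
rewrite [in RHS]inE unfold_in /=; case Hx: (isinr x); rewrite ?andbF ?andbT //.
by apply: (subsetP sub); rewrite inE.
Qed.

Lemma card_R (I : {set E}) : (#|Rset I| + #|I| = cv + #|E|)%N.
Proof.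
have -> : Rset I = [set x : idx E r | isinr x] :|: (inl @: (~: I)).
  apply/setP => x; rewrite !inE; case: x => [e|w] /=.
    apply/idP/imsetP => [H|[f Hf [->]]]; last by rewrite inE in Hf.
    by exists e; rewrite ?inE.
  by [].
rewrite cardsU.
have -> : [set x : idx E r | isinr x] :&: (inl @: (~: I)) = set0.
  apply/setP => x; rewrite !inE; case: x => [e|w] //=.
  by apply/negbTE/imsetP => -[f _].
rewrite cards0 subn0 card_imset; last by move=> ? ? [].
by rewrite -addnA [(#|~: I| + _)%N]addnC cardsC.
Qed.

Lemma dodgson_hom (I J K : {set E}) :
  #|I| = #|J| -> hom (Dodgson ends r I J K) (cv + cv) #|Rset I|.
Proof.
move=> eIJ t a t0; rewrite /Dodgson /=.
set a' := fun e => if e \in K then 0 else a e.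
have -> : (fun e => if e \in K then 0 else t * a e) = (fun e => t * a' e).
  by apply: functional_extensionality => e; rewrite /a'; case: (e \in K); rewrite ?mulr0.
set R := [set x : idx E r | if x is inl e then e \notin I else true].
set C := [set x : idx E r | if x is inl e then e \notin J else true].
have eRC : #|R| = size (enum C).
  rewrite -cardE; apply/eqP; rewrite -(eqn_add2r #|I|) {2}eIJ; apply/eqP.
  by rewrite (card_R I) -(card_R J).
have eM b : \matrix_(i < #|R|, j < #|R|) Mentry ends b (enum_val i) (nth (enum_val i) (enum C) j)
  = \matrix_(i < #|R|, j < #|R|) Mentry ends b (enum_val i) (nth (enum_val j) (enum C) j).
  by apply/matrixP => i j; rewrite !mxE (set_nth_default (enum_val j)) // -eRC.
rewrite !eM.
have := det_scale (fun i : 'I_#|R| => enum_val i) (fun j : 'I_#|R| => nth (enum_val j) (enum C) j) a' t.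
have -> : \prod_(i < #|R|) wt t (enum_val i) = t ^+ cv.
  by rewrite -big_enum_val prod_in //; apply/subsetP => x; rewrite !inE; case: x.
have -> : \prod_(j < #|R|) wt t (nth (enum_val j) (enum C) j) = t ^+ cv.
  rewrite -(@prod_in C t); last by apply/subsetP => x; rewrite !inE; case: x.
  rewrite -[in RHS]big_enum /=.
  case: (enum C) eRC => [|x0 s] eRC'.
    by rewrite big_nil big1 // => j; have := ltn_ord j; rewrite {2}eRC'.
  rewrite (big_nth x0) big_mkord -eRC'.
  by apply: eq_bigr => j _; rewrite (set_nth_default x0) // -eRC'.
move=> H; rewrite /Rset -/R -H exprD; ring.
Qed.
End D.
End Alg3.

Set Implicit Arguments. Unset Strict Implicit. Unset Printing Implicit Defensive.
Import Alg Alg2 Alg3.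
Module Alg4.
Import GRing.Theory Num.Theory.

Section D.
Variables (V E : finType) (ends : E -> V * V) (r : V).

Lemma dodgson_hom' (I J K : {set E}) n :
  #|I| = n -> #|J| = n ->
  hom (Dodgson ends r I J K) (cv E r + cv E r + n) (cv E r + #|E|).
Proof.
move=> hI hJ.
have h := @dodgson_hom V E ends r I J K (etrans hI (esym hJ)).
apply: (hom_shift h); have := @card_R V E r I; rewrite hI; lia.
Qed.

Lemma card3 (i k m : E) : i != k -> i != m -> k != m -> #|[set i; k; m]| = 3.
Proof.
move=> ik im km; rewrite -setUA cardsU1 cards2 km !inE.
by rewrite (negbTE ik) (negbTE im).
Qed.

Lemma DR_hom s (P : polyf E) : DR ends r s P ->
  exists p q, hom P p q /\ (q + size s + (cv E r + cv E r) = p + (#|E| + #|E|))%N.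
Proof.
elim=> {s P}.
- move=> i j k l m Q U HQ.
  move: U; rewrite /= !inE !negb_or => /and5P [/and4P [ij ik il im]
     /and3P [jk jl jm] /andP [kl km] lm _].
  exists (cv E r + cv E r + 2 + (cv E r + cv E r + 3))%N.
  exists (cv E r + #|E| + (cv E r + #|E|))%N; split; last by rewrite /=; lia.
  have H : hom (five_inv ends r i j k l m)
     (cv E r + cv E r + 2 + (cv E r + cv E r + 3))%N (cv E r + #|E| + (cv E r + #|E|))%N.
    apply: hom_sub; apply: hom_mul; apply: dodgson_hom';
      rewrite ?cards2 ?card3 // ?ij ?kl ?ik ?jl //.
  by case: HQ => ->; [|apply: hom_opp].
- move=> s l P A B C D Q _ [p [q [hP e]]] _ pA pB pC pD iA iB iC iD HP HQ.
  exists p.+1, q; split; last by rewrite size_rcons; lia.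
  have H := factor_hom pA pB pC pD iA iB iC iD hP HP.
  by case: HQ => ->; [|apply: hom_opp].
Qed.
End D.
End Alg4.

Set Implicit Arguments. Unset Strict Implicit. Unset Printing Implicit Defensive.
Module Gr.
Section G.
Variables (V E : finType) (ends : E -> V * V).
Implicit Types (F : {set E}) (x y : V).

Lemma adj_sym F : symmetric (adj ends F).
Proof. by move=> x y; apply/existsP/existsP => -[f Hf]; exists f; rewrite orbC. Qed.

Lemma csym F : connect_sym (adj ends F).
Proof. exact: sym_connect_sym (adj_sym F). Qed.

Lemma adj_sub (F F' : {set E}) : F \subset F' -> subrel (adj ends F) (adj ends F').
Proof.
move=> sub x y /existsP [f /andP [Hf H]]; apply/existsP; exists f.
by rewrite (subsetP sub).
Qed.

Lemma connect_subset (F F' : {set E}) : F \subset F' ->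
  forall x y, connect (adj ends F) x y -> connect (adj ends F') x y.
Proof.
move=> sub; apply: connect_sub => x y H; apply: connect1; exact: adj_sub H.
Qed.

Lemma no_out F x y : (forall z, ~~ adj ends F x z) -> connect (adj ends F) x y -> y = x.
Proof.
move=> H /connectP [[|z p]] /=; first by move=> _ ->.
by rewrite (negbTE (H z)).
Qed.

Definition cF F x := [set y | connect (adj ends F) x y].

Lemma compT F x : Defs.comp ends setT F x = cF F x.
Proof. by apply/setP => y; rewrite !inE. Qed.

Lemma ncompT F : ncomp ends setT F = #|[set cF F x | x in setT]|.
Proof. by rewrite /ncomp (eq_imset _ (compT F)). Qed.

Lemma cF_eq F x y : (cF F x == cF F y) = connect (adj ends F) x y.
Proof.
apply/eqP/idP => [H|H].
  have : y \in cF F y by rewrite inE connect0.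
  by rewrite -H inE.
by apply/setP => z; rewrite !inE (same_connect (csym F) H).
Qed.

Lemma ncomp0 : ncomp ends setT set0 = #|V|.
Proof.
rewrite ncompT.
have -> : [set cF set0 x | x in setT] = [set [set x] | x in setT].
  apply: eq_imset => x; apply/setP => y; rewrite !inE; apply/idP/eqP => [H|->].
    apply: (no_out _ H) => z; apply/existsP => -[f]; by rewrite inE.
  exact: connect0.
by rewrite card_imset ?cardsT //; exact: set1_inj.
Qed.

Lemma acyclic_sub (F F' : {set E}) : F' \subset F -> acyclic ends F -> acyclic ends F'.
Proof.
move=> sub /forallP H; apply/forallP => f; apply/implyP => Hf.
have := H f; rewrite (subsetP sub) //= => /negP H2; apply/negP => H3; apply: H2.
by apply: connect_subset H3; apply: setSD.
Qed.

Section Bridge.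
Variables (F : {set E}) (e : E).
Hypothesis eF : e \in F.
Let F' := F :\ e.
Let u := (ends e).1.
Let w := (ends e).2.
Hypothesis nuw : ~~ connect (adj ends F') u w.

Lemma adjF x z : adj ends F x z =
  [|| adj ends F' x z, ends e == (x, z) | ends e == (z, x)].
Proof.
apply/existsP/idP => [[f /andP [Hf H]]|].
  have [fe|ne] := eqVneq f e; first by move: H; rewrite fe => ->; rewrite orbT.
  by apply/orP; left; apply/existsP; exists f; rewrite !inE ne Hf.
case/or3P => [/existsP [f /andP [Hf H]]|H|H].
- by exists f; rewrite H; move: Hf; rewrite !inE => /andP [_ ->].
- by exists e; rewrite eF H.
- by exists e; rewrite eF H orbT.
Qed.

Definition Rr x y := [|| connect (adj ends F') x y,
   connect (adj ends F') x u && connect (adj ends F') w y |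
   connect (adj ends F') x w && connect (adj ends F') u y].

Lemma csF' x y : connect (adj ends F') x y = connect (adj ends F') y x.
Proof. exact: csym. Qed.

Lemma decomp x y : connect (adj ends F) x y -> Rr x y.
Proof.
case/connectP => p; elim: p x => [|z p IH] x /=.
  by move=> _ ->; rewrite /Rr connect0.
case/andP => axz /IH {}IH /IH Rzy.
move: axz; rewrite adjF => /or3P [a'|/eqP H|/eqP H].
- have cxz : connect (adj ends F') x z by apply: connect1.
  case/or3P: Rzy => [c|/andP [c1 c2]|/andP [c1 c2]]; apply/or3P.
  + by constructor 1; apply: connect_trans cxz c.
  + by constructor 2; rewrite (connect_trans cxz c1).
  + by constructor 3; rewrite (connect_trans cxz c1).
- have ex : x = u by rewrite /u H.
  have ez : z = w by rewrite /w H.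
  subst; case/or3P: Rzy => [c|/andP [c1 c2]|/andP [c1 c2]]; apply/or3P.
  + by constructor 2; rewrite connect0.
  + by constructor 1; rewrite csF' in c1; apply: connect_trans c1 c2.
  + by constructor 1.
- have ex : x = w by rewrite /w H.
  have ez : z = u by rewrite /u H.
  subst; case/or3P: Rzy => [c|/andP [c1 c2]|/andP [c1 c2]]; apply/or3P.
  + by constructor 3; rewrite connect0.
  + by constructor 1.
  + by constructor 1; rewrite csF' in c1; apply: connect_trans c1 c2.
Qed.

Lemma sub_F' : F' \subset F. Proof. exact: subD1set. Qed.

Lemma cuw : connect (adj ends F) u w.
Proof. by apply: connect1; rewrite adjF -surjective_pairing eqxx orbT. Qed.

Definition phi (X : {set V}) := [set y | [exists x in X, connect (adj ends F) x y]].

Lemma phi_cF x : phi (cF F' x) = cF F x.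
Proof.
apply/setP => y; rewrite !inE; apply/existsP/idP => [[z /andP [Hz H]]|H].
  rewrite inE in Hz; apply: connect_trans H.
  exact: connect_subset sub_F' _ _ Hz.
by exists x; rewrite inE connect0.
Qed.

Lemma ncomp_bridge : ncomp ends setT F' = (ncomp ends setT F).+1.
Proof.
rewrite !ncompT.
set C' := [set cF F' x | x in setT].
have wC : cF F' w \in C' by apply: imset_f.
rewrite (cardsD1 (cF F' w) C') wC add1n; congr _.+1.
have -> : [set cF F x | x in setT] = phi @: (C' :\ cF F' w).
  apply/setP => X; apply/imsetP/imsetP => [[x _ ->]|[Y]].
    have [cxw|ncxw] := boolP (connect (adj ends F') x w).
      exists (cF F' u); first by rewrite !inE cF_eq nuw imset_f.
      rewrite phi_cF; apply/eqP; rewrite cF_eq.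
      apply: (connect_trans (connect_subset sub_F' cxw)); rewrite csym.
      exact: cuw.
    by exists (cF F' x); rewrite ?phi_cF // !inE cF_eq ncxw imset_f.
  rewrite !inE => /andP [_ /imsetP [y _ ->]] ->.
  by exists y; rewrite ?phi_cF.
rewrite card_in_imset // => X Y; rewrite !inE => /andP [nX /imsetP [x _ eX]]
   /andP [nY /imsetP [y _ eY]]; subst X Y; rewrite !phi_cF => /eqP.
rewrite cF_eq => /decomp /or3P [c|/andP [c1 c2]|/andP [c1 c2]].
- by apply/eqP; rewrite cF_eq.
- by move: nY; rewrite cF_eq csF' c2.
- by move: nX; rewrite cF_eq c1.
Qed.
End Bridge.

Lemma forest_card F : acyclic ends F -> (#|F| + ncomp ends setT F = #|V|)%N.
Proof.
move: {2}#|F| (erefl #|F|) => n; elim: n F => [|n IH] F cF0 ac.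
  move/eqP: cF0; rewrite cards_eq0 => /eqP ->.
  by rewrite cards0 ncomp0.
have [e eF] : exists e, e \in F.
  by apply/set0Pn; rewrite -card_gt0 cF0.
have nuw : ~~ connect (adj ends (F :\ e)) (ends e).1 (ends e).2.
  by move/forallP: ac => /(_ e); rewrite eF.
rewrite (cardsD1 e F) eF add1n in cF0; case: cF0 => cF0.
have := IH (F :\ e) cF0 (acyclic_sub (subD1set _ _) ac).
rewrite ncomp_bridge // (cardsD1 e F) eF; lia.
Qed.
End G.
End Gr.

Set Implicit Arguments. Unset Strict Implicit. Unset Printing Implicit Defensive.
Import Gr.
Module PartB.
Section B.
Variables (V E : finType) (ends : E -> V * V).
Implicit Types (F S : {set E}) (x y v : V) (P : {set {set V}}).

Lemma iso_adj S F v z : isolated ends S v -> F \subset S ->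
  ~~ adj ends F v z.
Proof.
move=> /forallP iso sub; apply/existsP => -[f /andP [Hf H]].
have := iso f; rewrite (subsetP sub) //= => /andP [n1 n2].
by case/orP: H => /eqP e; move: n1 n2; rewrite e /= eqxx; [by []|by move=> _].
Qed.

Lemma iso_conn S F v y : isolated ends S v -> F \subset S ->
  connect (adj ends F) v y -> y = v.
Proof. by move=> iso sub; apply: no_out => z; apply: iso_adj iso sub. Qed.

Lemma iso_conn' S F v y : isolated ends S v -> F \subset S ->
  connect (adj ends F) y v -> y = v.
Proof. by move=> iso sub; rewrite csym; move/(iso_conn iso sub). Qed.

Lemma ncomp_iso S F v : isolated ends S v -> F \subset S ->
  ncomp ends setT F = (ncomp ends (setT :\ v) F).+1.
Proof.
move=> iso sub; rewrite ncompT /ncomp.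
have -> : [set cF ends F x | x in setT] = cF ends F v |: [set cF ends F x | x in setT :\ v].
  by rewrite -imsetU1 setD1K.
have -> : [set cF ends F x | x in setT :\ v] = [set Defs.comp ends (setT :\ v) F x | x in setT :\ v].
  apply: eq_in_imset => x; rewrite !inE andbT => xv; apply/setP => y; rewrite !inE andbT.
  case: (eqVneq y v) => [->|//].
  apply/negbTE/negP => c; have e := iso_conn' iso sub c; by rewrite e eqxx in xv.
rewrite cardsU1 -add1n; congr (_ + _)%N.
suff -> : cF ends F v \notin [set Defs.comp ends (setT :\ v) F x | x in setT :\ v] by [].
apply/imsetP => -[x]; rewrite !inE andbT => xv H.
have : x \in Defs.comp ends (setT :\ v) F x by rewrite !inE xv connect0.
by rewrite -H inE => /(iso_conn iso sub) e; rewrite e eqxx in xv.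
Qed.

Lemma sf_intra W S P F p x y : sf_forest ends W S P F -> p \in P -> x \in p -> y \in p ->
  connect (adj ends F) x y.
Proof.
case/and5P => _ _ _ /forallP H _ Hp Hx Hy.
by move: (H p); rewrite Hp /= => /forallP /(_ x); rewrite Hx /= => /forallP /(_ y); rewrite Hy.
Qed.

Lemma sf_sep W S P F p q x y : sf_forest ends W S P F -> p \in P -> q \in P -> p != q ->
  x \in p -> y \in q -> ~~ connect (adj ends F) x y.
Proof.
case/and5P => _ _ _ _ /forallP H Hp Hq pq Hx Hy.
move: (H p); rewrite Hp /= => /forallP /(_ q); rewrite Hq pq /= => /forallP /(_ x).
by rewrite Hx /= => /forallP /(_ y); rewrite Hy.
Qed.

Lemma part_ne W P p : is_part W P -> p \in P -> p != set0.
Proof. by case/andP => /forallP /(_ p) /implyP H _ /H /andP []. Qed.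

Lemma part_disj W P p q : is_part W P -> p \in P -> q \in P -> p != q -> [disjoint p & q].
Proof.
case/andP => _ /forallP /(_ p) /implyP H Hp Hq pq.
by move: (H Hp) => /forallP /(_ q) /implyP /(_ Hq) /implyP /(_ pq).
Qed.

Lemma v_in_part S P F v : isolated ends S v -> is_part setT P ->
  sf_forest ends setT S P F -> [set v] \in P.
Proof.
move=> iso ip sf; have sub : F \subset S by case/and5P: sf.
apply/negPn/negP => nv.
pose psi (p : {set V}) := [set y | [exists x in p, connect (adj ends F) x y]].
have psiE p x : p \in P -> x \in p -> psi p = cF ends F x.
  move=> Hp Hx; apply/setP => y; rewrite !inE; apply/existsP/idP => [[z /andP [Hz c]]|c].
    exact: connect_trans (sf_intra sf Hp Hx Hz) c.
  by exists x; rewrite Hx.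
set C := [set cF ends F x | x in setT].
have lt : (#|P| <= #|C :\ [set v]|)%N.
  rewrite -[#|P|](card_in_imset (f := psi)).
    apply: subset_leq_card; apply/subsetP => X /imsetP [p Hp ->].
    have [x Hx] : exists x, x \in p by apply/set0Pn; exact: part_ne ip Hp.
    rewrite (psiE p x) // !inE imset_f // andbT.
    apply/eqP => H.
    have : x \in cF ends F x by rewrite inE connect0.
    rewrite H inE => /eqP ex; subst x.
    have : p = [set v].
      apply/setP => y; rewrite inE; apply/idP/eqP => [Hy|->//].
      exact: iso_conn iso sub (sf_intra sf Hp Hx Hy).
    by move=> ep; rewrite -ep Hp in nv.
  move=> p q Hp Hq epq; apply/eqP/negP => /negP pq.
  have [x Hx] : exists x, x \in p by apply/set0Pn; exact: part_ne ip Hp.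
  have [y Hy] : exists y, y \in q by apply/set0Pn; exact: part_ne ip Hq.
  move: epq; rewrite (psiE p x) // (psiE q y) // => /eqP; rewrite cF_eq; apply/negP.
  exact: sf_sep sf Hp Hq pq Hx Hy.
have vC : [set v] \in C.
  apply/imsetP; exists v => //; apply/setP => y; rewrite !inE.
  apply/eqP/idP => [->|c]; first exact: connect0.
  exact: iso_conn iso sub c.
have := cardsD1 [set v] C; rewrite vC.
case/and5P: sf => _ _ /eqP nc _ _; move: nc; rewrite ncompT -/C; lia.
Qed.
End B.
End PartB.

Set Implicit Arguments. Unset Strict Implicit. Unset Printing Implicit Defensive.
Import Alg Gr PartB.
Module PartB2.
Section B.
Variables (V E : finType) (ends : E -> V * V).
Implicit Types (F S : {set E}) (x y v : V) (P : {set {set V}}).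

Lemma notin_part W P q v : is_part W P -> q \in P -> [set v] \in P -> q != [set v] -> v \notin q.
Proof.
move=> ip Hq vP qv; have := part_disj ip Hq vP qv.
move/disjoint_setI0 => H; apply/negP => vq.
have : v \in q :&: [set v] by rewrite !inE vq eqxx.
by rewrite H inE.
Qed.

Lemma sf_equiv S P F v : isolated ends S v -> is_part setT P -> [set v] \in P ->
  sf_forest ends setT S P F = sf_forest ends (setT :\ v) S (P :\ [set v]) F.
Proof.
move=> iso ip vP; rewrite /sf_forest; case sub: (F \subset S) => //=.
rewrite (ncomp_iso iso sub) (cardsD1 [set v] P) vP eqSS.
congr [&& _, _, _ & _].
- apply/forallP/forallP => H p.
    apply/implyP => /setD1P [_ Hp]; exact: (implyP (H p)) Hp.
  apply/implyP => Hp; case: (eqVneq p [set v]) => [->|pv].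
    apply/forallP => x; apply/implyP; rewrite inE => /eqP ->.
    apply/forallP => y; apply/implyP; rewrite inE => /eqP ->; exact: connect0.
  by have := H p; rewrite !inE pv Hp.
- apply/forallP/forallP => H p.
    apply/implyP => /setD1P [_ Hp]; apply/forallP => q; apply/implyP => /setD1P [_ Hq].
    by have := H p; rewrite Hp /= => /forallP /(_ q); rewrite Hq.
  apply/implyP => Hp; apply/forallP => q; apply/implyP => Hq; apply/implyP => pq.
  case: (eqVneq p [set v]) => [ep|pv].
    subst p; have vq := notin_part ip Hq vP (negbT (introF eqP (fun e => (negP pq) (introT eqP (esym e))))).
    apply/forallP => x; apply/implyP; rewrite inE => /eqP ->.
    apply/forallP => y; apply/implyP => Hy; apply/negP => /(iso_conn iso sub) e.
    by rewrite -e Hy in vq.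
  case: (eqVneq q [set v]) => [eq|qv].
    subst q; have vp := notin_part ip Hp vP pv.
    apply/forallP => x; apply/implyP => Hx.
    apply/forallP => y; apply/implyP; rewrite inE => /eqP ->.
    apply/negP => /(iso_conn' iso sub) e.
    by rewrite -e Hx in vp.
  by have := H p; rewrite !inE pv Hp /= => /forallP /(_ q); rewrite !inE qv Hq pq.
Qed.

Lemma part_D W P v : is_part W P -> [set v] \in P -> is_part (W :\ v) (P :\ [set v]).
Proof.
move=> ip vP; apply/andP; split.
  apply/forallP => p; apply/implyP => /setD1P [pv Hp].
  have := ip; case/andP => /forallP /(_ p) /implyP /(_ Hp) /andP [-> sW] _ /=.
  have vp := notin_part ip Hp vP pv.
  apply/subsetP => y Hy; rewrite !inE (subsetP sW) // andbT.
  by apply/eqP => e; rewrite -e Hy in vp.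
apply/forallP => p; apply/implyP => /setD1P [_ Hp].
apply/forallP => q; apply/implyP => /setD1P [_ Hq]; apply/implyP => pq.
exact: part_disj ip Hp Hq pq.
Qed.

Lemma Phi_v S P v : isolated ends S v -> is_part setT P ->
  (exists a, (Phi ends setT S P a != 0)%R) -> [set v] \in P.
Proof.
move=> iso ip [a Ha].
case: (boolP [exists F, sf_forest ends setT S P F]) => [/existsP [F HF]|/existsPn H].
  exact: v_in_part iso ip HF.
move: Ha; rewrite /Phi big_pred0 ?eqxx // => F; exact: negbTE (H F).
Qed.

Lemma Phi_eq S P v : isolated ends S v -> is_part setT P -> [set v] \in P ->
  Phi ends setT S P = Phi ends (setT :\ v) S (P :\ [set v]).
Proof.
move=> iso ip vP; apply: functional_extensionality => a; rewrite /Phi.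
by apply: eq_bigl => F; exact: sf_equiv.
Qed.

Lemma partB S v c (Q : polyf E) :
  isolated ends S v -> signed_sum ends setT S c Q ->
  signed_sum ends (setT :\ v) S (c - 2) Q.
Proof.
move=> iso [t [Ht eQ]].
have key z : z \in t -> [set v] \in z.1.2 /\ [set v] \in z.2.
  case/Ht => ip1 ip2 _ nz.
  have [a Ha] := nonzero_pt nz; rewrite GRing.mulf_eq0 negb_or in Ha.
  case/andP: Ha => H1 H2; split.
    by apply: Phi_v iso ip1 _; exists a.
  by apply: Phi_v iso ip2 _; exists a.
exists (map (fun z => (z.1.1, z.1.2 :\ [set v], z.2 :\ [set v])) t); split.
  move=> y /mapP [z Hx ->] /=; have [ip1 ip2 ec nz] := Ht z Hx.
  have [v1 v2] := key z Hx.
  rewrite -!Phi_eq //; split => //; try exact: part_D.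
  move: ec; rewrite (cardsD1 [set v] z.1.2) (cardsD1 [set v] z.2) v1 v2 /=.
  rewrite !add1n addSn addnS subn2 /= => <-; by [].
rewrite eQ; apply: functional_extensionality => a; rewrite big_map.
apply: eq_big_seq => z Hx /=; have [v1 v2] := key z Hx.
have [ip1 ip2 _ _] := Ht z Hx.
by rewrite -!Phi_eq.
Qed.
End B.
End PartB2.

Set Implicit Arguments. Unset Strict Implicit. Unset Printing Implicit Defensive.
Import Alg Alg2 Alg3 Alg4 Gr.
Module PartA.
Import GRing.Theory Num.Theory.
Local Open Scope ring_scope.

Section P.
Variables (V E : finType) (ends : E -> V * V).

Lemma Phi_hom (S : {set E}) (P : {set {set V}}) :
  hom (Phi ends setT S P) #|V| (#|S| + #|P|).
Proof.
move=> t a t0; rewrite /Phi !GRing.mulr_sumr; apply: eq_bigr => F.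
case/and5P => sub ac /eqP nc _ _.
rewrite prodrMl GRing.mulrA -GRing.exprD; congr (_ ^+ _ * _).
have := forest_card ac; rewrite nc cardsDS //.
have := subset_leq_card sub; lia.
Qed.

Lemma sum_hom (T : eqType) (s : seq T) (f : T -> polyf E) p q :
  (forall x, x \in s -> hom (f x) p q) ->
  hom (fun a => (\sum_(x <- s) f x a)%R) p q.
Proof.
move=> H t a t0; rewrite !GRing.mulr_sumr big_seq [RHS]big_seq.
by apply: eq_bigr => x Hx; apply: H.
Qed.

Lemma signed_hom (S : {set E}) c (Q : polyf E) :
  signed_sum ends setT S c Q -> hom Q (#|V| + #|V|) (#|S| + #|S| + c).
Proof.
case=> t [Ht ->]; apply: sum_hom => x /Ht [_ _ ec _].
have h : hom (fun a => (Phi ends setT S x.1.2 a * Phi ends setT S x.2 a)%R)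
   (#|V| + #|V|) (#|S| + #|S| + c).
  apply: hom_shift (hom_mul (Phi_hom S x.1.2) (Phi_hom S x.2)) _; lia.
move=> tt a t0; rewrite GRing.mulrCA h // GRing.mulrCA //.
Qed.
End P.
End PartA.


Import Alg Alg2 Alg3 Alg4 Gr PartB PartB2 PartA.

Theorem mainTheorem8 (V E : finType) (ends : E -> V * V) (r : V) :
  primitive_4pt ends ->
  (forall (s : seq E) (l : E) (P Q : polyf E) (c c' : nat),
     (5 <= size s)%N -> uniq (rcons s l) ->
     DR ends r s P -> DR ends r (rcons s l) Q ->
     P <> (@zerop E) -> Q <> (@zerop E) ->
     signed_sum ends setT (~: [set x in s]) c P ->
     signed_sum ends setT (~: [set x in rcons s l]) c' Q ->
     c' = c.+1) /\
  (forall (s : seq E) (v : V) (P : polyf E) (c : nat),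
     uniq s -> DR ends r s P -> P <> (@zerop E) ->
     isolated ends (~: [set x in s]) v ->
     signed_sum ends setT (~: [set x in s]) c P ->
     signed_sum ends (setT :\ v) (~: [set x in s]) (c - 2) P).
Proof.
move=> _; split.
  move=> s l P Q c c' _ U DRP DRQ nzP nzQ sP sQ.
  have [p1 [q1 [h1 e1]]] := DR_hom DRP.
  have [p2 [q2 [h2 e2]]] := DR_hom DRQ.
  have u1 := hom_unique nzP h1 (signed_hom sP).
  have u2 := hom_unique nzQ h2 (signed_hom sQ).
  have us : uniq s by move: U; rewrite rcons_uniq => /andP [].
  have cs : #|[set x in s]| = size s by rewrite cardsE; apply/card_uniqP.
  have cs' : #|[set x in rcons s l]| = size (rcons s l) by rewrite cardsE; apply/card_uniqP.
  have k1 := cardsC [set x in s]; have k2 := cardsC [set x in rcons s l].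
  rewrite size_rcons in e2 cs'.
  lia.
move=> s v P c _ _ _ iso sP; exact: partB iso sP.
Qed.
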